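(* For integers $0\le r\le m$ with $m\ge1$ and $k\ge1$, the rates of $\mathrm{RM}(r,m)$ and $\mathrm{RM}(r,m+k)$ satisfy $$R(r,m)-R(r,m+k)\le\frac{3k+4}{5\sqrt m}.$$
   Context: The rate of the Reed--Muller code $\mathrm{RM}(r,m)$ is $R(r,m)=2^{-m}\sum_{i=0}^{r}\binom{m}{i}$. *)

(* Defs.v *)
From Stdlib Require Import Reals Lra Lia.
Open Scope R_scope.

Definition rm_rate (r m : nat) : R :=
  sum_f_R0 (fun i => Binomial.C m i) r / 2 ^ m.

(* Main.v *)
Require Import Defs.
From Stdlib Require Import Reals Lra Lia.
From mathcomp Require all_boot zify.
Module M.
Import all_boot zify.
Local Open Scope nat_scope.

Lemma bin_mono n i : 2*i+1 <= n -> 'C(n,i) <= 'C(n,i.+1).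
Proof.
move=> h; have e := mul_bin_left n i.
have : i.+1 <= n - i by lia.
move: e; set a := 'C(n,i); set b := 'C(n,i.+1) => e h2. nia.
Qed.

Lemma bin_le_half n i : i <= n./2 -> 'C(n,i) <= 'C(n, n./2).
Proof.
move=> h; have [d hd] : exists d, i + d = n./2 by exists (n./2 - i); lia.
elim: d i hd {h} => [|d IH] i hd.
  by rewrite -hd addn0.
apply: leq_trans (IH i.+1 _); last by lia.
apply: bin_mono. have := odd_double_half n. lia.
Qed.

Lemma bin_le_mid n i : 'C(n,i) <= 'C(n, n./2).
Proof.
case: (leqP i n./2) => h; first exact: bin_le_half.
case: (leqP i n) => h2; last by rewrite bin_small.
rewrite -bin_sub //; apply: bin_le_half.
have := odd_double_half n. lia.
Qed.

Lemma central p : 'C(p.*2,p)^2 * p.*2.+1 <= 16^p.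
Proof.
elim: p => [|p IH]; first by [].
have e1 := mul_bin_diag p.*2.+1 p.
have e2 := mul_bin_diag p.*2.+2 p.
have e3 : 'C(p.*2.+1, p.+1) = 'C(p.*2.+1, p).
  rewrite -bin_sub; last by lia. congr binomial; lia.
rewrite /= e3 in e1. rewrite /= in e2.
have -> : p.+1.*2 = p.*2.+2 by rewrite doubleS.
move: e1 e2 IH. set c := 'C(p.*2,p). set c1 := 'C(p.*2.+1,p). set c2 := 'C(p.*2.+2,p.+1).
rewrite expnS. set P := 16^p => e1 e2 IH.
have h1 : (p.+1 * c2) = 2 * (p.*2.+1 * c) by nia.
have h2 : (p.+1)^2 * (c2^2 * p.*2.+3) = 4 * p.*2.+1 * p.*2.+3 * (c^2 * p.*2.+1).
  have -> : (p.+1)^2 * (c2^2 * p.*2.+3) = (p.+1*c2)*(p.+1*c2)*p.*2.+3.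
    rewrite !expnS !expn0; nia.
  rewrite h1 !expnS !expn0; nia.
have h3 : (p.+1)^2 * (c2^2 * p.*2.+3) <= (p.+1)^2 * (16 * P).
  rewrite h2. apply: leq_trans (_ : 4 * p.*2.+1 * p.*2.+3 * P <= _).
    by apply: leq_mul.
  rewrite !expnS !expn0. nia.
rewrite leq_pmul2l in h3; last by rewrite expn_gt0.
by rewrite [16 ^ p.+1]expnS.
Qed.

Lemma bin_sq n i : 'C(n,i)^2 * n <= 4^n.
Proof.
have hm := bin_le_mid n i.
have hod := odd_double_half n.
have hsq : 'C(n,i)^2 * n <= 'C(n,n./2)^2 * n.
  by apply: leq_mul => //; rewrite leq_exp2r.
apply: leq_trans hsq _.
set p := n./2. move: hod. fold p. case: (odd n) => /= hn; last first.
  rewrite -hn add0n. have := central p. rewrite (_ : 4^p.*2 = 16^p).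
    move=> h; apply: leq_trans h; apply: leq_mul => //.
  by rewrite -mul2n expnM.
have e2 := mul_bin_diag p.*2.+2 p.
have -> : 4^n = 4 * 16^p by rewrite -hn add1n expnS -mul2n expnM.
have := central p.+1. rewrite doubleS /= in e2 *. rewrite -/p in e2 *.
set c1 := 'C(p.*2.+1,p). rewrite -hn add1n.
set c2 := 'C(p.*2.+2,p.+1). rewrite expnS => h.
have h1 : c2 = 2 * c1 by nia.
rewrite h1 in h. rewrite !expnS !expn0 in h *. nia.
Qed.

Lemma fact_eq n : Factorial.fact n = n`!.
Proof. elim: n => [|n IH] //=. by rewrite factS IH. Qed.

Lemma bin_fact_std n i : (i <= n)%coq_nat ->
  binomial n i * (Factorial.fact i * Factorial.fact (Nat.sub n i)) = Factorial.fact n.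
Proof.
move/leP=> h. rewrite !fact_eq. have -> : Nat.sub n i = n - i by []. exact: bin_fact.
Qed.

Lemma sumS n r : \sum_(i < r.+1) 'C(n.+1,i) + 'C(n,r) = 2 * \sum_(i < r.+1) 'C(n,i).
Proof.
elim: r => [|r IH]; first by rewrite !big_ord_recr !big_ord0 /= !bin0.
rewrite big_ord_recr [in RHS]big_ord_recr /= binS.
have : \sum_(i < r.+1) 'C(n.+1,i) = 2 * \sum_(i < r.+1) 'C(n,i) - 'C(n,r) by lia.
move: IH. set A := \sum_(i < r.+1) 'C(n.+1,i). set B := \sum_(i < r.+1) 'C(n,i). lia.
Qed.

Definition Ssum n r := \sum_(i < r.+1) 'C(n,i).
Lemma Ssum0 n : Ssum n 0 = 1.
Proof. by rewrite /Ssum big_ord_recr big_ord0 bin0. Qed.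
Lemma SsumS n r : Ssum n r.+1 = Nat.add (Ssum n r) (binomial n r.+1).
Proof. by rewrite /Ssum big_ord_recr. Qed.
Lemma SsumP n r : Nat.add (Ssum n.+1 r) (binomial n r) = Nat.mul 2 (Ssum n r).
Proof. exact: sumS. Qed.
Lemma pow_eq a n : Nat.pow a n = a ^ n.
Proof. elim: n => [|n IH] //=. by rewrite expnS IH. Qed.
Lemma bin_sq' n i : (Nat.mul (Nat.mul (binomial n i) (binomial n i)) n <= Nat.pow 4 n)%coq_nat.
Proof. apply/leP. rewrite pow_eq. have := bin_sq n i. by rewrite expnS expn1. Qed.
End M.

Open Scope R_scope.

Lemma C_eq n i : (i <= n)%nat -> Binomial.C n i = INR (binomial.binomial n i).
Proof.
  intros h. unfold Binomial.C. rewrite <- (M.bin_fact_std n i h).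
  rewrite !mult_INR. field. split; apply INR_fact_neq_0.
Qed.

Lemma sum_eq n r : (r <= n)%nat -> sum_f_R0 (fun i => Binomial.C n i) r = INR (M.Ssum n r).
Proof.
  induction r as [|r IH]; intros h; simpl.
  - rewrite M.Ssum0, C_eq by lia. simpl. unfold binomial.binomial. destruct n; simpl; lra.
  - rewrite M.SsumS, plus_INR, IH by lia. rewrite C_eq by lia. reflexivity.
Qed.

Lemma step r n : (r <= n)%nat ->
  rm_rate r n - rm_rate r (n + 1) = INR (binomial.binomial n r) / 2 ^ (n + 1).
Proof.
  intros h. unfold rm_rate. rewrite !sum_eq by lia.
  pose proof (M.SsumP n r) as e. apply (f_equal INR) in e. rewrite plus_INR, mult_INR in e.
  replace (n+1)%nat with (S n) by lia. simpl pow.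
  assert (INR (M.Ssum (S n) r) = 2 * INR (M.Ssum n r) - INR (binomial.binomial n r)) by (simpl in e; lra).
  rewrite H. assert (0 < 2 ^ n) by (apply pow_lt; lra). field. lra.
Qed.

Lemma bnd n r : (1 <= n)%nat -> INR (binomial.binomial n r) / 2 ^ n <= 1 / (2 * 1) * 2 / sqrt (INR n).
Proof.
  intros h. pose proof (M.bin_sq' n r) as e. apply le_INR in e. rewrite !mult_INR, pow_INR in e.
  assert (hn : 0 < INR n) by (apply lt_0_INR; lia).
  assert (hs : 0 < sqrt (INR n)) by (apply sqrt_lt_R0; lra).
  assert (hss := sqrt_sqrt (INR n) (Rlt_le _ _ hn)).
  assert (hp : 0 < 2 ^ n) by (apply pow_lt; lra).
  replace (INR 4 ^ n) with (2 ^ n * 2 ^ n) in e by (rewrite <- Rpow_mult_distr; simpl; f_equal; lra).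
  set (b := INR (binomial.binomial n r)) in *.
  assert (hb : 0 <= b) by apply pos_INR.
  set (x := b / 2 ^ n).
  assert (hx : x * x * INR n <= 1).
  { unfold x. apply (Rmult_le_reg_r (2 ^ n * 2 ^ n)). nra.
    field_simplify; [| lra]. lra. }
  assert (hx0 : 0 <= x) by (unfold x; apply Rmult_le_pos; [lra | left; apply Rinv_0_lt_compat; lra]).
  assert (x * sqrt (INR n) <= 1) by nra.
  apply (Rmult_le_reg_r (sqrt (INR n))); auto. field_simplify; lra.
Qed.

Lemma accum r m k : (r <= m)%nat -> (1 <= m)%nat ->
  rm_rate r m - rm_rate r (m + k) <= INR k / (2 * sqrt (INR m)).
Proof.
  intros hr hm.
  assert (hn : 0 < INR m) by (apply lt_0_INR; lia).
  assert (hs : 0 < sqrt (INR m)) by (apply sqrt_lt_R0; lra).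
  induction k as [|k IH].
  - rewrite Nat.add_0_r. simpl. unfold Rdiv. rewrite Rmult_0_l. lra.
  - pose proof (step r (m + k) ltac:(lia)) as e.
    replace (m + k + 1)%nat with (m + S k)%nat in e by lia.
    pose proof (bnd (m + k) r ltac:(lia)) as b.
    assert (hmk : sqrt (INR m) <= sqrt (INR (m + k))) by (apply sqrt_le_1_alt; apply le_INR; lia).
    assert (1 / sqrt (INR (m + k)) <= 1 / sqrt (INR m)).
    { apply Rmult_le_compat_l; [lra|]. apply Rinv_le_contravar; lra. }
    replace (INR (binomial.binomial (m + k) r) / 2 ^ (m + S k))
      with (INR (binomial.binomial (m + k) r) / 2 ^ (m + k) / 2) in e
      by (replace (m + S k)%nat with (m + k + 1)%nat by lia; rewrite (pow_add 2 (m + k) 1), pow_1; field; apply pow_nonzero; lra).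
    rewrite S_INR.
    replace ((INR k + 1) / (2 * sqrt (INR m))) with (INR k / (2 * sqrt (INR m)) + (1 / sqrt (INR m)) / 2) by (field; lra).
    replace (1 / (2 * 1) * 2 / sqrt (INR (m + k))) with (1 / sqrt (INR (m + k))) in b by (field; apply Rgt_not_eq; apply sqrt_lt_R0; apply lt_0_INR; lia).
    lra.
Qed.

Theorem lemma8 (r m k : nat) :
  (r <= m)%nat -> (1 <= m)%nat -> (1 <= k)%nat ->
  rm_rate r m - rm_rate r (m + k) <= (3 * INR k + 4) / (5 * sqrt (INR m)).
Proof.
  intros hr hm hk. pose proof (accum r m k hr hm) as a.
  assert (hn : 0 < INR m) by (apply lt_0_INR; lia).
  assert (hs : 0 < sqrt (INR m)) by (apply sqrt_lt_R0; lra).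
  assert (hk0 : 0 <= INR k) by apply pos_INR.
  eapply Rle_trans; [exact a|].
  unfold Rdiv. rewrite !Rinv_mult.
  assert (0 < / sqrt (INR m)) by (apply Rinv_0_lt_compat; lra).
  nra.
Qed.
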